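(* Let $\mathcal{M}_1,\mathcal{M}_2$ be two matroids on the same finite ground set $E$ with $m=|E|$, and let $\textsc{OPT}$ be a maximum-cardinality set independent in both. For a uniformly random order $\pi$ of $E$ and $f\in[0,1]$, let $T_f^\pi$ be the set selected by Greedy after processing the first $fm$ elements of $\pi$, and for $i\in\{1,2\}$ let $\Phi_i(T_f^\pi)=\mathrm{span}_i(T_f^\pi)\cap\textsc{OPT}$. If $0<f,\epsilon\le\frac12$ and $\mathbb{E}_\pi[|T_1^\pi|]\le\left(\frac12+\epsilon\right)|\textsc{OPT}|$, then $$\mathbb{E}_\pi\left[|\Phi_1(T_f^\pi)\cap\Phi_2(T_f^\pi)|\right]\le 2\epsilon|\textsc{OPT}|\quad\text{and}\quad \mathbb{E}_\pi\left[|\Phi_1(T_f^\pi)\cup\Phi_2(T_f^\pi)|\right]\ge\left(1-\frac{2\epsilon}{f}+2\epsilon\right)|\textsc{OPT}|,$$ and consequently $\mathbb{E}_\pi[|T_f^\pi|]/|\textsc{OPT}|\ge \frac12-\left(\frac1f-2\right)\epsilon$.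
   Context: Greedy processes elements in order and adds an element whenever the current set together with it is independent in both $\mathcal{M}_1$ and $\mathcal{M}_2$. $\mathrm{span}_i(T)=\{e\in E:\mathrm{rank}_{\mathcal{M}_i}(T\cup\{e\})=\mathrm{rank}_{\mathcal{M}_i}(T)\}$. *)

(* Defs.v *)
From HB Require Import structures.
From mathcomp Require Import all_boot all_order all_algebra perm.
Set Implicit Arguments. Unset Strict Implicit. Unset Printing Implicit Defensive.
Import Order.TTheory GRing.Theory Num.Theory.

(* Matroids on the finite ground set E = the whole finType T,
   given by their independent sets. *)
Record matroid (T : finType) := Matroid {
  indep : {set T} -> bool;
  indep0 : indep set0;
  indep_sub : forall A B : {set T}, A \subset B -> indep B -> indep A;
  indep_exch : forall A B : {set T}, indep A -> indep B -> #|A| < #|B| ->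
                 exists2 x, x \in B :\: A & indep (x |: A)
}.

Definition mrank (T : finType) (M : matroid T) (A : {set T}) : nat :=
  \max_(B : {set T} | (B \subset A) && indep M B) #|B|.

Definition mspan (T : finType) (M : matroid T) (A : {set T}) : {set T} :=
  [set e | mrank M (e |: A) == mrank M A].

Definition greedy (T : finType) (M1 M2 : matroid T) (s : seq T) : {set T} :=
  foldl (fun S e => if indep M1 (e |: S) && indep M2 (e |: S) then e |: S else S)
        set0 s.

(* The order of E induced by a permutation p: p(x_1), ..., p(x_m),
   where x_1..x_m = enum T.  Uniform p gives a uniform order. *)
Definition order_of (T : finType) (p : {perm T}) : seq T := [seq p x | x <- enum T].

Definition greedy_prefix (T : finType) (M1 M2 : matroid T) (k : nat) (p : {perm T})
  : {set T} := greedy M1 M2 (take k (order_of p)).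

Definition Eperm (R : numFieldType) (T : finType) (X : {perm T} -> R) : R :=
  (#|{perm T}|%:R)^-1 * \sum_(p : {perm T}) X p.

(* Main.v *)
Require Import Defs.
From HB Require Import structures.
From mathcomp Require Import all_boot all_order all_algebra perm.
From mathcomp Require Import zify ring lra.
Import Order.TTheory GRing.Theory Num.Theory.

Section Mat.
Variables (T : finType) (M : matroid T).

Lemma mrank_ge (A B : {set T}) : B \subset A -> indep M B -> #|B| <= mrank M A.
Proof. by move=> sBA iB; apply: (@leq_bigmax_cond _ _ (fun B : {set T} => #|B|) B); rewrite sBA iB. Qed.

Lemma mrank_wit (A : {set T}) : exists2 B : {set T}, (B \subset A) && indep M B & mrank M A = #|B|.
Proof.
rewrite /mrank.
have : 0 < #|[pred B : {set T} | (B \subset A) && indep M B]|.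
  apply/card_gt0P; exists set0; by rewrite inE sub0set indep0.
move=> /(eq_bigmax_cond (fun B : {set T} => #|B|)) [B HB ->]; exists B => //.
Qed.

Lemma rank_indep (A : {set T}) : indep M A -> mrank M A = #|A|.
Proof.
move=> iA; apply/eqP; rewrite eqn_leq mrank_ge // andbT.
have [B /andP[sBA _] ->] := mrank_wit A; exact: subset_leq_card.
Qed.

Lemma mspan_indepE (A : {set T}) e : indep M A ->
  (e \in mspan M A) = (e \in A) || ~~ indep M (e |: A).
Proof.
move=> iA; rewrite /mspan inE (rank_indep _ iA).
case: (boolP (e \in A)) => eA.
  have -> : e |: A = A by apply/setUidPr; rewrite sub1set.
  by rewrite rank_indep // eqxx.
case: (boolP (indep M (e |: A))) => ieA /=.
  by rewrite rank_indep // cardsU1 eA add1n; apply/negP => /eqP; lia.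
apply/eqP; apply/eqP; rewrite eqn_leq; apply/andP; split; last first.
  by apply: mrank_ge => //; apply: subsetUr.
have [B /andP[sB iB] ->] := mrank_wit (e |: A).
rewrite leqNgt; apply/negP => lt.
have [x /setDP[xB xA] ixA] := indep_exch iA iB lt.
move: (subsetP sB x xB); rewrite in_setU1 (negbTE xA) orbF => /eqP xe.
by move: ixA; rewrite xe (negbTE ieA).
Qed.

Lemma msub_span (A : {set T}) : indep M A -> A \subset mspan M A.
Proof. by move=> iA; apply/subsetP => x xA; rewrite mspan_indepE // xA. Qed.

Lemma mspan_card (A X : {set T}) : indep M A -> indep M X -> X \subset mspan M A -> #|X| <= #|A|.
Proof.
move=> iA iX sX; rewrite leqNgt; apply/negP => lt.
have [x /setDP[xX xA] ixA] := indep_exch iA iX lt.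
by move: (subsetP sX x xX); rewrite mspan_indepE // (negbTE xA) ixA.
Qed.

Lemma mspan_mono (A B : {set T}) : indep M A -> indep M B -> A \subset B ->
  mspan M A \subset mspan M B.
Proof.
move=> iA iB sAB; apply/subsetP => x; rewrite !mspan_indepE //.
case/orP => [xA|nI]; first by rewrite (subsetP sAB x xA).
case: (boolP (x \in B)) => //= _; apply: contra nI; apply: indep_sub.
exact: setUS.
Qed.

End Mat.
Arguments mrank_ge {T M A B}.
Arguments rank_indep {T M A}.
Arguments mspan_indepE {T M A} e.
Arguments msub_span {T M A}.
Arguments mspan_card {T M A X}.
Arguments mspan_mono {T M A B}.

Section Gr.
Variables (T : finType) (M1 M2 : matroid T).

Definition gstep (S : {set T}) e :=
  if indep M1 (e |: S) && indep M2 (e |: S) then e |: S else S.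

Lemma greedyE s : greedy M1 M2 s = foldl gstep set0 s.
Proof. by []. Qed.

Lemma greedy_rcons s x : greedy M1 M2 (rcons s x) = gstep (greedy M1 M2 s) x.
Proof. by rewrite greedyE foldl_rcons. Qed.

Lemma greedy_indep s : indep M1 (greedy M1 M2 s) && indep M2 (greedy M1 M2 s).
Proof.
elim/last_ind: s => [|s x IH]; first by rewrite /greedy /= !indep0.
rewrite greedy_rcons /gstep; by case: ifP.
Qed.

Lemma greedy_indep1 s : indep M1 (greedy M1 M2 s).
Proof. by case/andP: (greedy_indep s). Qed.
Lemma greedy_indep2 s : indep M2 (greedy M1 M2 s).
Proof. by case/andP: (greedy_indep s). Qed.

Lemma foldl_gstep_sub (S : {set T}) (t : seq T) : S \subset foldl gstep S t.
Proof.
elim: t S => [|x t IH] S /=; first by [].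
apply: subset_trans (IH _); rewrite /gstep; case: ifP => _ //; exact: subsetUr.
Qed.

Lemma greedy_cat s t : greedy M1 M2 s \subset greedy M1 M2 (s ++ t).
Proof. by rewrite !greedyE foldl_cat; apply: foldl_gstep_sub. Qed.

Lemma greedy_take_mono s j k : j <= k -> greedy M1 M2 (take j s) \subset greedy M1 M2 (take k s).
Proof. by move=> jk; rewrite -(subnKC jk) takeD; apply: greedy_cat. Qed.

Lemma greedy_span s x : x \in s ->
  (x \in mspan M1 (greedy M1 M2 s)) || (x \in mspan M2 (greedy M1 M2 s)).
Proof.
elim/last_ind: s => [|s y IH] //; rewrite mem_rcons in_cons.
have sub : greedy M1 M2 s \subset greedy M1 M2 (rcons s y).
  by rewrite -cats1 greedy_cat.
have m1 := mspan_mono (greedy_indep1 s) (greedy_indep1 (rcons s y)) sub.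
have m2 := mspan_mono (greedy_indep2 s) (greedy_indep2 (rcons s y)) sub.
case/orP => [/eqP->|xs]; last first.
  by case/orP: (IH xs) => h; [rewrite (subsetP m1 _ h) | rewrite (subsetP m2 _ h) orbT].
have := greedy_rcons s y; rewrite /gstep; case: ifP => h E.
  have := subsetP (msub_span (greedy_indep1 (rcons s y))) y.
  by rewrite E setU11 => /(_ isT) ->.
move/negbT: h; rewrite negb_and => /orP[h|h].
  apply/orP; left; apply: (subsetP m1); by rewrite mspan_indepE ?greedy_indep1 // h orbT.
apply/orP; right; apply: (subsetP m2); by rewrite mspan_indepE ?greedy_indep2 // h orbT.
Qed.

End Gr.

Lemma take_rem (T : eqType) (e : T) (s : seq T) k :
  k <= index e s -> take k (rem e s) = take k s.
Proof.
move=> hk; rewrite remE takel_cat ?size_takel ?index_size //.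
by rewrite take_takel.
Qed.

Lemma swap_index (T : finType) (e : T) (s : seq T) j :
  uniq s -> j.+1 < size s ->
  (index e (map (tperm (nth e s j) (nth e s j.+1)) s) == j.+1) = (index e s == j).
Proof.
move=> us hj.
set a := nth e s j; set b := nth e s j.+1.
have hj' : j < size s by lia.
have ab : a != b by rewrite nth_uniq // neq_ltn ltnSn.
have Ia : index a s = j by rewrite index_uniq.
have Ib : index b s = j.+1 by rewrite index_uniq.
rewrite -{1}(tpermK a b e) index_map; last exact: (can_inj (tpermK a b)).
case: tpermP => [->|->|ea eb].
  by rewrite Ib Ia; apply/idP/idP.
  by rewrite Ia Ib; apply/idP/idP => /eqP h; exfalso; clear -h; lia.
case: (boolP (e \in s)) => es; last first.
  rewrite memNindex //; apply/idP/idP => /eqP h; exfalso; move: hj; rewrite h; [by rewrite ltnn | by rewrite ltnNge leqnSn].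
apply/idP/idP => /eqP h.
  by case: eb; rewrite /b -h nth_index.
by case: ea; rewrite /a -h nth_index.
Qed.

Lemma swap_rem (T : finType) (e : T) (s : seq T) j :
  uniq s -> j.+1 < size s -> index e s = j ->
  rem e (map (tperm (nth e s j) (nth e s j.+1)) s) = rem e s.
Proof.
move=> us hj ie.
have hj' : j < size s by lia.
have es : e \in s by rewrite -index_mem ie.
have ea : nth e s j = e by rewrite -ie nth_index.
set b := nth e s j.+1.
have Hs : s = take j s ++ e :: b :: drop j.+2 s.
  by rewrite -{1}(cat_take_drop j s) (drop_nth e hj') ea (drop_nth e hj).
rewrite ea.
have ut := us; rewrite Hs cat_uniq /= in ut.
case/and3P: ut => _ hA /and3P[eD bD _].
move: hA; rewrite !negb_or => /and3P[eA bA _].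
move: eD; rewrite in_cons negb_or => /andP[eb eD].
have fix1 : forall L : seq T, e \notin L -> b \notin L -> map (tperm e b) L = L.
  move=> L h1 h2; rewrite -[RHS]map_id; apply/eq_in_map => x xL; apply: tpermD.
    by apply/eqP => ex; move: h1; rewrite ex xL.
  by apply/eqP => ex; move: h2; rewrite ex xL.
have remc : forall (A B : seq T), e \notin A -> rem e (A ++ B) = A ++ rem e B.
  elim=> [|x A IH] B //=; rewrite in_cons negb_or => /andP[xe xA].
  by rewrite eq_sym (negbTE xe) IH.
move: Hs eA bA eD bD fix1 remc.
set A := take j s; set D := drop j.+2 s; clearbody A D => Hs eA bA eD bD fix1 remc.
rewrite Hs map_cat /= tpermL tpermR fix1 // fix1 // !remc //= eqxx.
by rewrite eq_sym (negbTE eb).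
Qed.

Section Pos.
Variables (T : finType) (e : T).

Definition idx (p : {perm T}) := index e (order_of p).
Definition sig (p : {perm T}) := rem e (order_of p).

Lemma order_uniq (p : {perm T}) : uniq (order_of p).
Proof. by rewrite /order_of map_inj_uniq ?enum_uniq //; apply: perm_inj. Qed.

Lemma order_mem (p : {perm T}) x : x \in order_of p.
Proof. by rewrite /order_of -(permKV p x) mem_map ?mem_enum //; apply: perm_inj. Qed.

Lemma order_size (p : {perm T}) : size (order_of p) = #|T|.
Proof. by rewrite /order_of size_map cardT. Qed.

Lemma idx_lt (p : {perm T}) : idx p < #|T|.
Proof. by rewrite /idx -(order_size p) index_mem order_mem. Qed.

Lemma tperm_conj (p : {perm T}) a b x : tperm (p a) (p b) (p x) = p (tperm a b x).
Proof.
case: (tpermP a b x) => [->|->|xa xb]; rewrite ?tpermL ?tpermR //.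
by rewrite tpermD //; apply/eqP => /perm_inj ?; [apply: xa | apply: xb].
Qed.

Lemma order_tperm (p : {perm T}) j : j.+1 < #|T| ->
  order_of (tperm (nth e (enum T) j) (nth e (enum T) j.+1) * p)%g =
  map (tperm (nth e (order_of p) j) (nth e (order_of p) j.+1)) (order_of p).
Proof.
move=> hj.
have hs : #|T| = size (enum T) by rewrite cardT.
rewrite /order_of -map_comp; apply: eq_map => x /=.
rewrite permM (nth_map e) -?hs; last by apply: ltnW.
by rewrite (nth_map e) -?hs // tperm_conj.
Qed.

Lemma Q_shift (G : seq T -> nat) j : j.+1 < #|T| ->
  \sum_(p : {perm T}) (idx p == j.+1) * G (sig p) =
  \sum_(p : {perm T}) (idx p == j) * G (sig p).
Proof.
move=> hj.
rewrite (reindex_inj (mulgI (tperm (nth e (enum T) j) (nth e (enum T) j.+1)))) /=.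
apply: eq_bigr => p _.
rewrite /idx /sig order_tperm // swap_index ?order_uniq ?order_size //.
case: eqP => // h.
by rewrite swap_rem ?order_uniq ?order_size.
Qed.

Lemma Q_const (G : seq T -> nat) j : j < #|T| ->
  \sum_(p : {perm T}) (idx p == j) * G (sig p) =
  \sum_(p : {perm T}) (idx p == 0) * G (sig p).
Proof.
elim: j => [|j IH] hj //.
by rewrite Q_shift // IH //; apply: ltnW.
Qed.

Lemma equi (Pj : nat -> nat) (G : seq T -> nat) :
  \sum_(p : {perm T}) Pj (idx p) * G (sig p) =
  (\sum_(j < #|T|) Pj j) * \sum_(p : {perm T}) (idx p == 0) * G (sig p).
Proof.
transitivity (\sum_(p : {perm T}) \sum_(j < #|T|) (idx p == j) * (Pj j * G (sig p))).
  apply: eq_bigr => p _.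
  rewrite (bigD1 (Ordinal (idx_lt p))) //= eqxx mul1n big1 ?addn0 // => i ne.
  case: eqP => // h; case/eqP: ne; apply: val_inj => /=; by rewrite h.
rewrite exchange_big big_distrl /=; apply: eq_bigr => j _.
rewrite -(@Q_const G j (ltn_ord j)) big_distrr /=; apply: eq_bigr => p _.
by rewrite mulnCA.
Qed.

End Pos.
Arguments idx {T} e p.
Arguments sig {T} e p.
Arguments order_uniq {T} p.
Arguments order_mem {T} p x.
Arguments order_size {T} p.
Arguments idx_lt {T} e p.
Arguments equi {T} e Pj G.

Lemma cnt_ge m k : \sum_(j < m) (k <= j) = m - k.
Proof.
elim: m => [|m IH]; first by rewrite big_ord0.
by rewrite big_ord_recr /= IH; case: (leqP k m) => h /=; lia.
Qed.

Lemma cnt_lt m k : \sum_(j < m) (j < k) = minn m k.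
Proof.
elim: m => [|m IH]; first by rewrite big_ord0 min0n.
by rewrite big_ord_recr /= IH; case: (ltnP m k) => h /=; lia.
Qed.

Section PerE.
Variables (T : finType) (M1 M2 : matroid T) (e : T).

Definition Gk k (s : seq T) : bool :=
  (e \notin mspan M1 (greedy M1 M2 (take k s))) &&
  (e \notin mspan M2 (greedy M1 M2 (take k s))).

Lemma Gk_mono j k s : j <= k -> Gk k s -> Gk j s.
Proof.
move=> jk /andP[h1 h2]; have sub := @greedy_take_mono _ M1 M2 s j k jk.
apply/andP; split.
  apply: contra h1; apply/subsetP; apply: mspan_mono => //; exact: greedy_indep1.
apply: contra h2; apply/subsetP; apply: mspan_mono => //; exact: greedy_indep2.
Qed.

Lemma fact_a k (p : {perm T}) :
  (e \notin mspan M1 (greedy_prefix M1 M2 k p)) && (e \notin mspan M2 (greedy_prefix M1 M2 k p)) ->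
  (k <= idx e p) && Gk k (sig e p).
Proof.
move=> h.
have ki : k <= idx e p.
  rewrite leqNgt; apply/negP => lt.
  have := @greedy_span _ M1 M2 (take k (order_of p)) e.
  rewrite in_take ?order_mem // => /(_ lt).
  by case/andP: h => /negbTE -> /negbTE ->.
by rewrite ki /Gk /sig take_rem.
Qed.

Lemma fact_b n k K (p : {perm T}) : idx e p = n -> n < K -> n <= k -> Gk k (sig e p) ->
  e \in greedy_prefix M1 M2 K p.
Proof.
move=> hn nK nk G; move: (@Gk_mono n k _ nk G).
rewrite /Gk /sig take_rem; last by rewrite -/(idx e p) hn.
set S := greedy M1 M2 (take n (order_of p)) => /andP[h1 h2].
rewrite mspan_indepE ?negb_or ?greedy_indep1 // in h1.
rewrite mspan_indepE ?negb_or ?greedy_indep2 // in h2.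
case/andP: h1 => eS /negbNE i1; case/andP: h2 => _ /negbNE i2.
have es := order_mem p e.
have : e \in greedy M1 M2 (take n.+1 (order_of p)).
  rewrite (take_nth e); last by rewrite order_size -hn idx_lt.
  have -> : nth e (order_of p) n = e by rewrite -hn nth_index.
  by rewrite greedy_rcons /gstep -/S i1 i2 /= setU11.
by apply/subsetP; apply: greedy_take_mono.
Qed.


Definition Qe k := \sum_(p : {perm T}) (idx e p == 0) * Gk k (sig e p).

Lemma sum_a k :
  \sum_(p : {perm T}) ((e \notin mspan M1 (greedy_prefix M1 M2 k p)) &&
                      (e \notin mspan M2 (greedy_prefix M1 M2 k p)))
  <= (#|T| - k) * Qe k.
Proof.
apply: (@leq_trans (\sum_(p : {perm T}) (fun n => nat_of_bool (k <= n)) (idx e p) * (fun s => nat_of_bool (Gk k s)) (sig e p))).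
  apply: leq_sum => p _ /=.
  case h: (_ && _) => //.
  by case/andP: (@fact_a k p h) => -> ->.
by rewrite -(cnt_ge #|T| k); apply/eq_leq/(equi e (fun n => nat_of_bool (k <= n)) (fun s => nat_of_bool (Gk k s))).
Qed.

Lemma sum_b k : k <= #|T| ->
  k * Qe k <= \sum_(p : {perm T}) (e \in greedy_prefix M1 M2 k p).
Proof.
move=> hk.
have E := equi e (fun n => nat_of_bool (n < k)) (fun s => nat_of_bool (Gk k s)).
rewrite /= cnt_lt (minn_idPr hk) in E; rewrite /Qe -E.
apply: leq_sum => p _ /=.
case h1: (idx e p < k) => //=; case h2: (Gk k _) => //=.
by rewrite (@fact_b (idx e p) k k p) // ltnW.
Qed.

Lemma sum_c k : k < #|T| ->
  k.+1 * Qe k <= \sum_(p : {perm T}) (e \in greedy_prefix M1 M2 #|T| p).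
Proof.
move=> hk.
have E := equi e (fun n => nat_of_bool (n < k.+1)) (fun s => nat_of_bool (Gk k s)).
rewrite /= cnt_lt (minn_idPr hk) in E; rewrite /Qe -E.
apply: leq_sum => p _ /=.
case h1: (idx e p < k.+1) => //=; case h2: (Gk k _) => //=.
by rewrite (@fact_b (idx e p) k #|T| p) // idx_lt.
Qed.

End PerE.
Arguments Qe {T} M1 M2 e k.
Arguments Gk {T} M1 M2 e k s.
Arguments sum_a {T} M1 M2 e k.
Arguments sum_b {T} M1 M2 e k.

Lemma card_IE (T : finType) (A B : {set T}) : #|A :&: B| = \sum_(e in A) (e \in B).
Proof.
rewrite (eq_bigr (fun e => if e \in B then 1 else 0)); last by move=> e _; case: (e \in B).
rewrite -big_mkcondr sum1_card; apply: eq_card => x; by rewrite !inE.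
Qed.

Section Det.
Variables (T : finType) (M1 M2 : matroid T) (OPT : {set T}).
Hypotheses (hOPT1 : indep M1 OPT) (hOPT2 : indep M2 OPT).

Let S k p := greedy_prefix M1 M2 k p.
Let Ph1 k p := mspan M1 (S k p) :&: OPT.
Let Ph2 k p := mspan M2 (S k p) :&: OPT.

Lemma S_i1 k p : indep M1 (S k p). Proof. exact: greedy_indep1. Qed.
Lemma S_i2 k p : indep M2 (S k p). Proof. exact: greedy_indep2. Qed.

Lemma D5 k p : #|Ph1 k p :|: Ph2 k p| + #|Ph1 k p :&: Ph2 k p| <= 2 * #|S k p|.
Proof.
rewrite cardsUI mul2n -addnn leq_add //; apply: mspan_card.
- exact: S_i1.
- by apply: indep_sub hOPT1; apply: subsetIr.
- exact: subsetIl.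
- exact: S_i2.
- by apply: indep_sub hOPT2; apply: subsetIr.
- exact: subsetIl.
Qed.

Lemma D_inter k p : #|OPT :&: S k p| <= #|Ph1 k p :&: Ph2 k p|.
Proof.
apply: subset_leq_card; apply/subsetP => x; rewrite in_setI => /andP[xO xS].
rewrite !in_setI xO !andbT; apply/andP; split.
  exact: (subsetP (msub_span (S_i1 k p)) x xS).
exact: (subsetP (msub_span (S_i2 k p)) x xS).
Qed.

Lemma D_full p : #|OPT| <= #|Ph1 #|T| p :|: Ph2 #|T| p|.
Proof.
apply: subset_leq_card; apply/subsetP => x xO.
have := @greedy_span _ M1 M2 (take #|T| (order_of p)) x.
have tk : take #|T| (order_of p) = order_of p by rewrite -{1}(order_size p) take_size.
rewrite tk order_mem /Ph1 /Ph2 /S /greedy_prefix tk => /(_ isT).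
by rewrite in_setU !in_setI xO !andbT.
Qed.

Lemma D_mono k p : k <= #|T| -> #|Ph1 k p :&: Ph2 k p| <= #|Ph1 #|T| p :&: Ph2 #|T| p|.
Proof.
move=> hk; apply: subset_leq_card.
have sub : S k p \subset S #|T| p by apply: greedy_take_mono.
apply: setISS; apply: setSI; apply: mspan_mono => //; [exact: S_i1|exact: S_i1|exact: S_i2|exact: S_i2].
Qed.

Lemma D_split k p : #|Ph1 k p :|: Ph2 k p| + #|OPT :\: (Ph1 k p :|: Ph2 k p)| = #|OPT|.
Proof.
rewrite -(cardsID (Ph1 k p :|: Ph2 k p) OPT); congr (_ + _).
by rewrite (setIidPr _) // subUset !subsetIr.
Qed.

Lemma D_V k p : #|OPT :\: (Ph1 k p :|: Ph2 k p)| =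
  \sum_(e in OPT) ((e \notin mspan M1 (greedy_prefix M1 M2 k p)) &&
                   (e \notin mspan M2 (greedy_prefix M1 M2 k p))).
Proof.
rewrite setDE card_IE; apply: eq_bigr => e eO.
by rewrite in_setC in_setU !in_setI eO !andbT negb_or.
Qed.

End Det.

Local Open Scope ring_scope.

Theorem lemma5 (R : realFieldType) (T : finType) (M1 M2 : matroid T)
  (OPT : {set T})
  (hOPT1 : indep M1 OPT) (hOPT2 : indep M2 OPT)
  (hOPTmax : forall S : {set T}, indep M1 S -> indep M2 S -> (#|S| <= #|OPT|)%N)
  (f eps : R) (k : nat)
  (hf0 : 0 < f) (hf1 : f <= 1 / 2) (he0 : 0 < eps) (he1 : eps <= 1 / 2)
  (hk : f * #|T|%:R = k%:R)
  (hT1 : Eperm (fun p => #|greedy_prefix M1 M2 #|T| p|%:R : R)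
         <= (1 / 2 + eps) * #|OPT|%:R) :
  [/\ Eperm (fun p => #|(mspan M1 (greedy_prefix M1 M2 k p) :&: OPT)
                        :&: (mspan M2 (greedy_prefix M1 M2 k p) :&: OPT)|%:R : R)
        <= 2 * eps * #|OPT|%:R,
      (1 - 2 * eps / f + 2 * eps) * #|OPT|%:R
        <= Eperm (fun p => #|(mspan M1 (greedy_prefix M1 M2 k p) :&: OPT)
                        :|: (mspan M2 (greedy_prefix M1 M2 k p) :&: OPT)|%:R : R)
    & (1 / 2 - (f^-1 - 2) * eps) * #|OPT|%:R
        <= Eperm (fun p => #|greedy_prefix M1 M2 k p|%:R : R)].
Proof.
have km : (2 * k <= #|T|)%N.
  rewrite -(@ler_nat R) natrM -hk; have := ler0n R #|T|; nra.
have km1 : (k <= #|T|)%N by apply: leq_trans km; rewrite leq_pmull.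
set m := #|T| in km km1 hk hT1 *.
set o := #|OPT|.
set P := #|{perm T}|.
set q := (\sum_(e in OPT) Qe M1 M2 e k)%N.
set ST1 := (\sum_(p : {perm T}) #|greedy_prefix M1 M2 m p|)%N.
set A := (\sum_(p : {perm T}) #|(mspan M1 (greedy_prefix M1 M2 m p) :&: OPT)
                        :&: (mspan M2 (greedy_prefix M1 M2 m p) :&: OPT)|)%N.
set SIk := (\sum_(p : {perm T}) #|(mspan M1 (greedy_prefix M1 M2 k p) :&: OPT)
                        :&: (mspan M2 (greedy_prefix M1 M2 k p) :&: OPT)|)%N.
set SUk := (\sum_(p : {perm T}) #|(mspan M1 (greedy_prefix M1 M2 k p) :&: OPT)
                        :|: (mspan M2 (greedy_prefix M1 M2 k p) :&: OPT)|)%N.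
set STk := (\sum_(p : {perm T}) #|greedy_prefix M1 M2 k p|)%N.
have PoE : (P * o = \sum_(p : {perm T}) o)%N by rewrite sum_nat_const.
have F1 : (P * o + A <= 2 * ST1)%N.
  rewrite PoE /A /ST1 big_distrr -big_split /=; apply: leq_sum => p _.
  apply: leq_trans (D5 _ M1 M2 OPT hOPT1 hOPT2 m p).
  by rewrite leq_add2r; apply: D_full.
have F2 : (SIk <= A)%N.
  by apply: leq_sum => p _; apply: D_mono.
have F3 : (P * o <= SUk + (m - k) * q)%N.
  rewrite PoE (eq_bigr _ (fun p _ => esym (D_split _ M1 M2 OPT k p))) big_split /=.
  rewrite leq_add2l (eq_bigr _ (fun p _ => D_V _ M1 M2 OPT k p)) exchange_big /=.
  rewrite /q big_distrr /=; apply: leq_sum => e _; exact: sum_a.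
have STkO : (k * q <= \sum_(p : {perm T}) #|OPT :&: greedy_prefix M1 M2 k p|)%N.
  rewrite (eq_bigr _ (fun p _ => card_IE _ OPT (greedy_prefix M1 M2 k p))) exchange_big /=.
  rewrite /q big_distrr /=; apply: leq_sum => e _; exact: sum_b.
have F5 : (k * q <= SIk)%N.
  by apply: leq_trans STkO _; apply: leq_sum => p _; apply: D_inter.
have F4 : (SUk + k * q <= 2 * STk)%N.
  apply: leq_trans (_ : (SUk + SIk <= _)%N); first by rewrite leq_add2l.
  rewrite /SUk /SIk /STk big_distrr -big_split /=; apply: leq_sum => p _.
  exact: D5.
have P0 : (0 < P)%N by apply/card_gt0P; exists 1%g.
have pR0 : (0 : R) < P%:R by rewrite ltr0n.
have EP : forall X : {perm T} -> nat,
    Eperm (fun p => (X p)%:R : R) = (\sum_(p : {perm T}) X p)%:R / P%:R.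
  by move=> X; rewrite /Eperm natr_sum mulrC.
have h1 := EP (fun p => #|greedy_prefix M1 M2 m p|); rewrite /= -/ST1 in h1.
rewrite h1 ler_pdivrMr // in hT1.
have e1 := EP (fun p => #|(mspan M1 (greedy_prefix M1 M2 k p) :&: OPT)
                        :&: (mspan M2 (greedy_prefix M1 M2 k p) :&: OPT)|).
have e2 := EP (fun p => #|(mspan M1 (greedy_prefix M1 M2 k p) :&: OPT)
                        :|: (mspan M2 (greedy_prefix M1 M2 k p) :&: OPT)|).
have e3 := EP (fun p => #|greedy_prefix M1 M2 k p|).
rewrite /= -/SIk in e1; rewrite /= -/SUk in e2; rewrite /= -/STk in e3.
rewrite e1 e2 e3 ler_pdivrMr // !ler_pdivlMr //.
move: F1 F2 F3 F4 F5; rewrite -!(ler_nat R) !natrD !natrM natrB //.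
have mE : m%:R = f^-1 * k%:R :> R by rewrite -hk mulrA mulVf ?mul1r // gt_eqF.
have c2 : 2 <= f^-1 :> R.
  by rewrite -[f^-1]mul1r ler_pdivlMr //; lra.
rewrite mE.
move: (f^-1) c2 => c c2.
set pr := P%:R; set or := o%:R; set qr := q%:R; set kr := k%:R.
have or0 : 0 <= or by apply: ler0n.
move=> F1 F2 F3 F4 F5.
have key : kr * qr <= 2 * eps * or * pr by lra.
have H1 : 0 <= (c - 1) * (2 * eps * or * pr - kr * qr) by apply: mulr_ge0; lra.
have H2 : 0 <= (c - 2) * (2 * eps * or * pr - kr * qr) by apply: mulr_ge0; lra.
split; [lra | lra | lra].
Qed.
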